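(* In the abstract boundary problem setting described in the context, the operators $\gamma_0,\gamma_1:H_1\to K$ extend by continuity to bounded operators $\Gamma_0,\Gamma_1:\mathcal D(T^* )\to K'$ (with $\mathcal D(T^* )$ carrying the graph topology), and $$\langle T^*u,v\rangle-\langle u,T^*v\rangle=\langle \Gamma_1u,\Gamma_0v\rangle_{K',K}-\langle\Gamma_0u,\Gamma_1v\rangle_{K',K}$$ for every $u\in\mathcal D(T^* )$ and $v\in H_1$.
   Context: Inner products are linear in the first argument and conjugate-linear in the second. Let $H_0$ be a separable Hilbert space with inner product $\langle\cdot,\cdot\rangle$, let $T$ be a closed densely defined symmetric operator in $H_0$ with adjoint $T^*$, and equip $\mathcal D(T^* )$ with the graph norm. Let $H_1\subset H_0$ be a dense subspace which is a Hilbert space in its own right with bounded inclusion $H_1\to H_0$. Let $K^\partial$ be a separable Hilbert space with inner product $\langle\cdot,\cdot\rangle_\partial$ and $K\subset K^\partial$ a dense subspace which is a Hilbert space in its own right with bounded inclusion. Let $K'$ be the space of continuous anti-linear functionals on $K$ (a Hilbert space with the dual norm); $K^\partial$ is regarded as a dense subspace of $K'$ via $y\mapsto(x\mapsto\langle y,x\rangle_\partial)$, so $K\subset K^\partial\subset K'$. For $y\in K'$, $x\in K$ put $\langle y,x\rangle_{K',K}=y(x)$ and $\langle x,y\rangle_{K,K'}=\overline{y(x)}$; these agree with $\langle\cdot,\cdot\rangle_\partial$ when $y\in K^\partial$. Standing assumptions: $H_1\subset\mathcal D(T^* )$ and $H_1$ is dense in $\mathcal D(T^* )$ in the graph norm;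 $T^*|_{H_1}:H_1\to H_0$ is bounded; $\gamma_0,\gamma_1:H_1\to K$ are bounded linear operators such that $\gamma=\gamma_0\oplus\gamma_1:H_1\to K\oplus K$ is surjective; $\operatorname{Ker}\gamma$ is dense in $H_0$ and $\mathcal D(T)=\operatorname{Ker}\gamma$; and the Lagrange identity $\langle T^*u,v\rangle-\langle u,T^*v\rangle=\langle\gamma_1u,\gamma_0v\rangle_\partial-\langle\gamma_0u,\gamma_1v\rangle_\partial$ holds for all $u,v\in H_1$. *)

(* Defs.v *)
From HB Require Import structures.
From mathcomp Require Import all_boot all_order all_algebra.
From mathcomp Require Import reals.
From mathcomp Require Export complex.
Set Implicit Arguments. Unset Strict Implicit. Unset Printing Implicit Defensive.
Import Order.TTheory GRing.Theory Num.Theory.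
Local Open Scope ring_scope.

Section Hilbert.
Variable R : realType.
Local Notation C := (complex R).

Section OnSpace.
Variable V : lmodType C.

Definition is_inner (ip : V -> V -> C) : Prop :=
  [/\ (forall (a : C) (x y z : V), ip (a *: x + y) z = a * ip x z + ip y z),
      (forall x y : V, ip y x = (ip x y)^*),
      (forall x : V, 0 <= ip x x) &
      (forall x : V, ip x x = 0 -> x = 0)].

(* induced norm (a nonnegative real number, viewed inside C) *)
Definition hnorm (ip : V -> V -> C) (x : V) : C := sqrtC (ip x x).

Definition complete_for (nrm : V -> C) : Prop :=
  forall u : nat -> V,
    (forall eps : C, 0 < eps -> exists N : nat, forall m n : nat,
        (N <= m)%N -> (N <= n)%N -> nrm (u m - u n) < eps) ->
    exists l : V, forall eps : C, 0 < eps -> exists N : nat, forall n : nat,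
        (N <= n)%N -> nrm (u n - l) < eps.

Definition is_hilbert (ip : V -> V -> C) : Prop :=
  is_inner ip /\ complete_for (hnorm ip).

Definition separable_for (nrm : V -> C) : Prop :=
  exists d : nat -> V, forall (x : V) (eps : C), 0 < eps ->
    exists n : nat, nrm (x - d n) < eps.

Definition dense_in (nrm : V -> C) (A B : V -> Prop) : Prop :=
  forall x : V, B x -> forall eps : C, 0 < eps ->
    exists y : V, A y /\ nrm (x - y) < eps.

Definition subspace (D : V -> Prop) : Prop :=
  D 0 /\ forall (a : C) (x y : V), D x -> D y -> D (a *: x + y).

Definition linear_on (D : V -> Prop) (T : V -> V) : Prop :=
  subspace D /\ forall (a : C) (x y : V), D x -> D y -> T (a *: x + y) = a *: T x + T y.

Definition conv_to (nrm : V -> C) (u : nat -> V) (l : V) : Prop :=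
  forall eps : C, 0 < eps -> exists N : nat, forall n : nat,
    (N <= n)%N -> nrm (u n - l) < eps.

Definition closed_op (nrm : V -> C) (D : V -> Prop) (T : V -> V) : Prop :=
  forall (u : nat -> V) (x y : V), (forall n, D (u n)) ->
    conv_to nrm u x -> conv_to nrm (fun n => T (u n)) y -> D x /\ T x = y.

Definition symmetric_op (ip : V -> V -> C) (D : V -> Prop) (T : V -> V) : Prop :=
  forall x y : V, D x -> D y -> ip (T x) y = ip x (T y).

Definition is_adjoint (ip : V -> V -> C) (D : V -> Prop) (T : V -> V)
    (Ds : V -> Prop) (Ts : V -> V) : Prop :=
  (forall u : V, Ds u <-> exists w : V, forall v : V, D v -> ip (T v) u = ip v w) /\
  (forall u : V, Ds u -> forall v : V, D v -> ip (T v) u = ip v (Ts u)).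

Definition graph_norm (ip : V -> V -> C) (Ts : V -> V) (u : V) : C :=
  sqrtC (ip u u + ip (Ts u) (Ts u)).

End OnSpace.

Definition bounded_lin (V W : lmodType C) (nV : V -> C) (nW : W -> C)
    (f : V -> W) : Prop :=
  (forall (a : C) (x y : V), f (a *: x + y) = a *: f x + f y) /\
  exists c : C, forall x : V, nW (f x) <= c * nV x.

End Hilbert.

(* Main.v *)
Require Import Defs.
From HB Require Import structures.
From mathcomp Require Import all_boot all_order all_algebra.
From mathcomp Require Import reals complex.
From mathcomp Require Import ring lra.
From Stdlib Require Import Classical ClassicalEpsilon.
Import Order.TTheory GRing.Theory Num.Theory.
Local Open Scope complex_scope.
Local Open Scope ring_scope.

Set Implicit Arguments. Unset Strict Implicit.

Section IP.
Variable R : realType.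
Local Notation C := (complex R).

Lemma ge0_realC (z : C) : 0 <= z -> z = (complex.Re z)%:C.
Proof.
move=> hz; case: z hz => a b; rewrite lecE /= => /andP[/eqP -> _]; by [].
Qed.

Lemma gt0_realC (z : C) : 0 < z -> z = (complex.Re z)%:C /\ 0 < complex.Re z.
Proof.
move=> hz; have h := @ge0_realC z (ltW hz); split => //.
by move: hz; rewrite h ltcR.
Qed.

Variable V : lmodType C.
Variable ip : V -> V -> C.
Hypothesis hip : is_inner ip.

Let ipL : forall (a : C) (x y z : V), ip (a *: x + y) z = a * ip x z + ip y z.
Proof. by case: hip. Qed.
Lemma ipC x y : ip y x = (ip x y)^*.
Proof. by case: hip. Qed.
Lemma ip_ge0 x : 0 <= ip x x.
Proof. by case: hip. Qed.
Lemma ip_eq0 x : ip x x = 0 -> x = 0.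
Proof. by case: hip => _ _ _ H; apply: H. Qed.

Lemma ip0l z : ip 0 z = 0.
Proof.
have := ipL 1 0 0 z; rewrite scale1r addr0 mul1r => h.
have : ip 0 z + 0 = ip 0 z + ip 0 z by rewrite addr0.
by move/addrI.
Qed.
Lemma ipDl x y z : ip (x + y) z = ip x z + ip y z.
Proof. by have := ipL 1 x y z; rewrite scale1r mul1r. Qed.
Lemma ipZl a x z : ip (a *: x) z = a * ip x z.
Proof. by rewrite -[a *: x]addr0 ipL ip0l addr0. Qed.
Lemma ipNl x z : ip (- x) z = - ip x z.
Proof. by rewrite -scaleN1r ipZl mulN1r. Qed.
Lemma ipBl x y z : ip (x - y) z = ip x z - ip y z.
Proof. by rewrite ipDl ipNl. Qed.
Lemma ip0r z : ip z 0 = 0.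
Proof. by rewrite ipC ip0l conjC0. Qed.
Lemma ipDr x y z : ip z (x + y) = ip z x + ip z y.
Proof. by rewrite ipC ipDl rmorphD /= -!ipC. Qed.
Lemma ipZr a x z : ip z (a *: x) = a^* * ip z x.
Proof. by rewrite ipC ipZl rmorphM /= -ipC. Qed.
Lemma ipNr x z : ip z (- x) = - ip z x.
Proof. by rewrite ipC ipNl rmorphN /= -ipC. Qed.
Lemma ipBr x y z : ip z (x - y) = ip z x - ip z y.
Proof. by rewrite ipDr ipNr. Qed.

Definition nr x := complex.Re (hnorm ip x).

Lemma hnormE x : hnorm ip x = (nr x)%:C.
Proof. by rewrite /nr -ge0_realC // /hnorm sqrtC_ge0 ip_ge0. Qed.
Lemma nr_ge0 x : 0 <= nr x.
Proof. by rewrite -ler0c -hnormE /hnorm sqrtC_ge0 ip_ge0. Qed.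
Lemma ipxxE x : ip x x = (nr x ^+ 2)%:C.
Proof. by rewrite rmorphXn /= -hnormE /hnorm sqrtCK. Qed.
Lemma Re_ipxx x : complex.Re (ip x x) = nr x ^+ 2.
Proof. by rewrite ipxxE. Qed.
Lemma nr_eq0 x : nr x = 0 -> x = 0.
Proof. by move=> h; apply: ip_eq0; rewrite ipxxE h expr0n. Qed.
Lemma nr0 : nr 0 = 0.
Proof.
have := ipxxE 0; rewrite ip0l => /(congr1 (@complex.Re R)) /= /eqP.
by rewrite eq_sym sqrf_eq0 => /eqP.
Qed.

Lemma CS x y : `|ip x y| <= (nr x * nr y)%:C.
Proof.
have [y0|ny] := eqVneq (nr y) 0.
  by rewrite (@nr_eq0 y y0) ip0r normr0 nr0 mulr0.
set z := ip x y; set s := ip y y.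
have sE : s = (nr y ^+ 2)%:C by rewrite /s ipxxE.
have s0 : 0 < s by rewrite sE ltcR exprn_gt0 // lt_def ny nr_ge0.
have sJ : s^* = s by rewrite sE; apply: conjc_real.
set l := z / s.
have h := ip_ge0 (x - l *: y).
have E : ip (x - l *: y) (x - l *: y) = ip x x - z * z^* / s.
  rewrite ipBl !ipBr !ipZl !ipZr -/z -/s (ipC x y) -/z.
  rewrite /l rmorphM /= rmorphV ?unitfE ?lt0r_neq0 //= sJ.
  field; exact: lt0r_neq0.
rewrite E subr_ge0 ler_pdivrMr // in h.
rewrite -(ler_pXn2r (n:=2)) // ?nnegrE ?normr_ge0 //; last by rewrite ler0c mulr_ge0 ?nr_ge0.
rewrite normCK; apply: (le_trans h).
by rewrite ipxxE sE -rmorphM -rmorphXn exprMn.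
Qed.

Lemma Re_le_norm (z : C) : complex.Re z <= complex.Re `|z|.
Proof.
rewrite normc_def /=; case: z => a b /=.
apply: le_trans (ler_norm a) _.
rewrite -sqrtr_sqr ler_sqrt; first by rewrite lerDl sqr_ge0.
by rewrite addr_ge0 ?sqr_ge0.
Qed.

Lemma nrD x y : nr (x + y) <= nr x + nr y.
Proof.
rewrite -(ler_pXn2r (n:=2)) // ?nnegrE ?nr_ge0 ?addr_ge0 ?nr_ge0 //.
rewrite -Re_ipxx ipDl !ipDr (ipC x y) !raddfD /= !Re_ipxx.
have h1 := Re_le_norm (ip x y).
have h2 : complex.Re `|ip x y| <= nr x * nr y.
  by have := CS x y; rewrite [`|_|]ge0_realC ?normr_ge0 // lecR.
have h3 : complex.Re ((ip x y)^*) = complex.Re (ip x y) by case: (ip x y).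
rewrite h3; nra.
Qed.

Lemma nrZ a x : nr (a *: x) = complex.Re `|a| * nr x.
Proof.
have ha : 0 <= complex.Re `|a| by rewrite -ler0c -ge0_realC ?normr_ge0.
apply/eqP; rewrite -(eqrXn2 (n:=2)) ?mulr_ge0 ?nr_ge0 //.
rewrite -Re_ipxx ipZl ipZr mulrA -normCK ipxxE [`|a|]ge0_realC ?normr_ge0 //.
by rewrite -rmorphXn -rmorphM /= exprMn.
Qed.

Lemma Re_normR (t : R) : complex.Re `|t%:C| = `|t|.
Proof. by rewrite normc_def /= expr0n addr0 sqrtr_sqr. Qed.

Lemma nrZR (t : R) x : nr (t%:C *: x) = `|t| * nr x.
Proof. by rewrite nrZ Re_normR. Qed.

Lemma nrN x : nr (- x) = nr x.
Proof. by rewrite -scaleN1r (_ : -1 = (-1)%:C) ?nrZR ?normrN ?normr1 ?mul1r // rmorphN rmorph1. Qed.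

Lemma nrB x y : nr (x - y) = nr (y - x).
Proof. by rewrite -nrN opprB. Qed.

End IP.
Unset Implicit Arguments.

Section Real.
Variable R : realType.

Lemma le_of_eps (a b : R) : (forall e, 0 < e -> a <= b + e) -> a <= b.
Proof.
move=> h; rewrite leNgt; apply/negP => ab.
have : 0 < (a - b) / 2 by rewrite divr_gt0 // subr_gt0.
move/h; lra.
Qed.

Lemma half_pow_small (e : R) : 0 < e -> exists N : nat, (2^-1) ^+ N < e.
Proof.
move=> he.
have h0 : 0 <= e^-1 by rewrite invr_ge0 ltW.
have hb := archi_boundP h0.
set N := Num.Def.archi_bound e^-1 in hb.
exists N.
have hN : (N%:R : R) < 2 ^+ N by rewrite -natrX ltr_nat ltn_expl.
rewrite exprVn -(invrK e) ltf_pV2 ?posrE ?exprn_gt0 ?invr_gt0 //.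
exact: lt_trans hb hN.
Qed.

Lemma nat_above (a : R) : exists k : nat, a <= k%:R.
Proof.
have [a0|a0] := lerP 0 a.
  by exists (Num.Def.archi_bound a); apply/ltW/archi_boundP.
by exists 0%N; rewrite ltW.
Qed.

End Real.
Arguments le_of_eps {R}.
Arguments half_pow_small {R}.
Arguments nat_above {R}.

Definition rcauchy (R : realType) (V : lmodType (complex R)) (n : V -> R) (u : nat -> V) :=
  forall e, 0 < e -> exists N, forall m k, (N <= m)%N -> (N <= k)%N -> n (u m - u k) < e.
Definition rlim (R : realType) (V : lmodType (complex R)) (n : V -> R) (u : nat -> V) (l : V) :=
  forall e, 0 < e -> exists N, forall k, (N <= k)%N -> n (u k - l) < e.
Arguments rcauchy {R V}.
Arguments rlim {R V}.

Lemma zid (V : zmodType) (a b c d : V) : a - d - c = (a - (b + c)) - (d - b).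
Proof. by rewrite opprB opprD !addrA (addrAC (a - b)) subrK addrAC. Qed.

Section OM.
Variable R : realType.
Local Notation C := (complex R).
Variables X Y : lmodType C.
Variables (nX : X -> R) (nY : Y -> R).
Hypothesis nX_ge0 : forall x, 0 <= nX x.
Hypothesis nX_D : forall x y, nX (x + y) <= nX x + nX y.
Hypothesis nX_Z : forall (t : R) x, nX (t%:C *: x) = `|t| * nX x.
Hypothesis nY_ge0 : forall x, 0 <= nY x.
Hypothesis nY_D : forall x y, nY (x + y) <= nY x + nY y.
Hypothesis nY_Z : forall (t : R) x, nY (t%:C *: x) = `|t| * nY x.
Hypothesis nY_eq0 : forall y, nY y = 0 -> y = 0.
Variable S : X -> Prop.
Hypothesis S0 : S 0.
Hypothesis SL : forall a x y, S x -> S y -> S (a *: x + y).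
Hypothesis Scomp : forall u, (forall n, S (u n)) -> rcauchy nX u ->
  exists l, S l /\ rlim nX u l.
Hypothesis Ycomp : forall u, rcauchy nY u -> exists l, rlim nY u l.
Variable L : X -> Y.
Hypothesis HL : forall a x y, L (a *: x + y) = a *: L x + L y.
Variable cL : R.
Hypothesis cL_ge0 : 0 <= cL.
Hypothesis HLb : forall x, nY (L x) <= cL * nX x.
Hypothesis Lsurj : forall y, exists x, S x /\ L x = y.

Lemma nX0 : nX 0 = 0.
Proof. by have := nX_Z 0 0; rewrite scaler0 normr0 mul0r. Qed.
Lemma nY0 : nY 0 = 0.
Proof. by have := nY_Z 0 0; rewrite scaler0 normr0 mul0r. Qed.
Lemma neg1C : (-1 : R)%:C = -1 :> C.
Proof. by rewrite rmorphN rmorph1. Qed.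
Lemma nXN x : nX (- x) = nX x.
Proof. by rewrite -scaleN1r -neg1C nX_Z normrN normr1 mul1r. Qed.
Lemma nYN x : nY (- x) = nY x.
Proof. by rewrite -scaleN1r -neg1C nY_Z normrN normr1 mul1r. Qed.
Lemma nXB x y : nX (x - y) = nX (y - x).
Proof. by rewrite -nXN opprB. Qed.
Lemma nYB x y : nY (x - y) = nY (y - x).
Proof. by rewrite -nYN opprB. Qed.
Lemma nY_tri x y z : nY (x - z) <= nY (x - y) + nY (y - z).
Proof. by rewrite (_ : x - z = (x - y) + (y - z)) ?nY_D // addrA subrK. Qed.
Lemma nX_tri x y z : nX (x - z) <= nX (x - y) + nX (y - z).
Proof. by rewrite (_ : x - z = (x - y) + (y - z)) ?nX_D // addrA subrK. Qed.

Lemma L0 : L 0 = 0.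
Proof.
have := HL 1 0 0; rewrite !scale1r addr0 => h.
have : L 0 + 0 = L 0 + L 0 by rewrite addr0.
by move/addrI.
Qed.
Lemma LZ a x : L (a *: x) = a *: L x.
Proof. by rewrite -[a *: x]addr0 HL L0 addr0. Qed.
Lemma LD x y : L (x + y) = L x + L y.
Proof. by have := HL 1 x y; rewrite !scale1r. Qed.
Lemma LN x : L (- x) = - L x.
Proof. by rewrite -scaleN1r LZ scaleN1r. Qed.
Lemma LB x y : L (x - y) = L x - L y.
Proof. by rewrite LD LN. Qed.
Lemma SZ a x : S x -> S (a *: x).
Proof. by move=> Sx; rewrite -[a *: x]addr0; apply: SL. Qed.
Lemma SD x y : S x -> S y -> S (x + y).
Proof. by move=> Sx Sy; have := SL 1 x y Sx Sy; rewrite scale1r. Qed.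
Lemma SB x y : S x -> S y -> S (x - y).
Proof. by move=> Sx Sy; rewrite -scaleN1r addrC; apply: SL. Qed.

Definition approx (n : nat) (y : Y) :=
  forall e, 0 < e -> exists x, [/\ S x, nX x <= n%:R & nY (L x - y) < e].

Lemma baire : exists n y0 r, 0 < r /\ forall y, nY (y - y0) < r -> approx n y.
Proof.
apply: NNPP => Hn.
have step : forall (np : nat * (Y * R)), exists q : Y * R, 0 < np.2.2 ->
   [/\ 0 < q.2, q.2 <= np.2.2 / 2 &
    forall z, nY (z - q.1) <= q.2 -> nY (z - np.2.1) < np.2.2 /\
      forall x, S x -> nX x <= np.1%:R -> L x <> z].
  case=> n [y0 r] /=.
  case: (lerP r 0) => [r0|r0]; first by exists (0, 0).
  have [y [hy1 hy2]] : exists y, nY (y - y0) < r /\ ~ approx n y.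
    apply: NNPP => H2; apply: Hn; exists n, y0, r; split => // y hy.
    by apply: NNPP => H3; apply: H2; exists y.
  have [e [he1 he2]] : exists e, 0 < e /\ forall x, S x -> nX x <= n%:R -> e <= nY (L x - y).
    apply: NNPP => H4; apply: hy2 => e he; apply: NNPP => H5; apply: H4.
    exists e; split => // x Sx hx; rewrite leNgt; apply/negP => lt.
    by apply: H5; exists x.
  exists (y, Num.min (Num.min ((r - nY (y - y0)) / 2) (e / 2)) (r / 2)) => _ /=.
  split.
  - by rewrite !lt_min !divr_gt0 // subr_gt0.
  - by rewrite !ge_min lexx orbT.
  move=> z hz; split.
    have h1 : nY (z - y) <= (r - nY (y - y0)) / 2 by apply: (le_trans hz); rewrite !ge_min lexx.
    have := nY_tri z y y0; lra.
  move=> x Sx hx Lxz; have := he2 x Sx hx; rewrite Lxz.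
  have : nY (z - y) <= e / 2 by apply: (le_trans hz); rewrite !ge_min lexx orbT.
  lra.
have [f hf] := ClassicalEpsilon.choice _ step.
pose s := fun k => nat_rect (fun _ => (Y * R)%type) (0, 1) (fun k p => f (k, p)) k.
have sS : forall k, s k.+1 = f (k, s k) by [].
have pos : forall k, 0 < (s k).2.
  elim=> [|k IH]; first by rewrite /= ltr01.
  by rewrite sS; case: (hf (k, s k) IH).
have hfk : forall k, [/\ 0 < (s k.+1).2, (s k.+1).2 <= (s k).2 / 2 &
    forall z, nY (z - (s k.+1).1) <= (s k.+1).2 -> nY (z - (s k).1) < (s k).2 /\
      forall x, S x -> nX x <= k%:R -> L x <> z].
  by move=> k; rewrite sS; exact: (hf (k, s k) (pos k)).
have rle : forall k, (s k).2 <= (2^-1) ^+ k.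
  elim=> [|k IH]; first by rewrite /= expr0.
  case: (hfk k) => _ h _; rewrite exprS; apply: (le_trans h); lra.
have nest : forall k m, (k <= m)%N -> forall z, nY (z - (s m).1) <= (s m).2 ->
    nY (z - (s k).1) <= (s k).2.
  move=> k; elim=> [|m IH].
    by rewrite leqn0 => /eqP ->.
  rewrite leq_eqVlt => /orP[/eqP -> //|]; rewrite ltnS => km z hz.
  apply: IH => //; case: (hfk m) => _ _ /(_ z hz) [] /ltW //.
have self : forall j, nY ((s j).1 - (s j).1) <= (s j).2.
  by move=> j; rewrite subrr nY0 ltW.
have cau : rcauchy nY (fun k => (s k).1).
  move=> e he; have [N hN] := half_pow_small (e / 2) (divr_gt0 he (ltr0Sn _ 1)).
  exists N => m k hm hk /=.
  have h1 := nest N m hm _ (self m).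
  have h2 := nest N k hk _ (self k).
  have := nY_tri (s m).1 (s N).1 (s k).1; rewrite (nYB (s N).1) .
  have := rle N; lra.
have [l hl] := Ycomp _ cau.
have near : forall k, nY (l - (s k).1) <= (s k).2.
  move=> k; apply: le_of_eps => e he.
  have [N hN] := hl e he.
  have hk := nest k (maxn N k) (leq_maxr _ _) _ (self (maxn N k)).
  have := hN (maxn N k) (leq_maxl _ _).
  have := nY_tri l (s (maxn N k)).1 (s k).1; rewrite (nYB l (s (maxn N k)).1) /=; lra.
have [x [Sx Lx]] := Lsurj l.
have [k hk] := nat_above (nX x).
case: (hfk k) => _ _ /(_ l (near k.+1)) [_ /(_ x Sx hk)].
by move/(_ Lx).
Qed.

Lemma scaleVK (t : R) (y : Y) : t != 0 -> (t^-1)%:C *: (t%:C *: y) = y.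
Proof. by move=> t0; rewrite scalerA -rmorphM mulVf // rmorph1 scale1r. Qed.

Lemma approx_ball : exists M, 0 <= M /\ forall y e, 0 < e ->
  exists x, [/\ S x, nX x <= M * nY y & nY (L x - y) < e].
Proof.
have [n [y0 [r [r0 hb]]]] := baire.
have A2 : forall y, nY y < r -> forall e, 0 < e ->
    exists x, [/\ S x, nX x <= 2 * n%:R & nY (L x - y) < e].
  move=> y hy e he.
  have he2 : 0 < e / 2 by rewrite divr_gt0.
  have hy1 : nY (y0 + y - y0) < r by rewrite addrAC subrr add0r.
  have hy2 : nY (y0 - y0) < r by rewrite subrr nY0.
  have [x1 [S1 n1 h1]] := hb (y0 + y) hy1 (e / 2) he2.
  have [x2 [S2 n2 h2]] := hb y0 hy2 (e / 2) he2.
  exists (x1 - x2); split; first exact: SB.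
    have := nX_D x1 (- x2); rewrite nXN; lra.
  rewrite LB (zid _ (L x1) y0 y (L x2)).
  have := nY_D (L x1 - (y0 + y)) (- (L x2 - y0)); rewrite nYN; lra.
exists (4 * n%:R / r); split; first by rewrite divr_ge0 ?mulr_ge0 ?ler0n // ltW.
move=> y e he.
have [ny0|ny0] := eqVneq (nY y) 0.
  by exists 0; rewrite (nY_eq0 y ny0) nX0 nY0 mulr0 L0 subr0 nY0; split.
have nyp : 0 < nY y by rewrite lt_def ny0 nY_ge0.
set t := r / (2 * nY y).
have tp : 0 < t by rewrite divr_gt0 // mulr_gt0.
have t0 : t != 0 by rewrite gt_eqF.
have hy' : nY (t%:C *: y) < r.
  rewrite nY_Z gtr0_norm // /t.
  have -> : r / (2 * nY y) * nY y = r / 2 by field; rewrite gt_eqF.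
  lra.
have [x' [S' n' h']] := A2 _ hy' (t * e) (mulr_gt0 tp he).
exists ((t^-1)%:C *: x'); split.
- exact: SZ.
- rewrite nX_Z gtr0_norm ?invr_gt0 //.
  have -> : 4 * n%:R / r * nY y = t^-1 * (2 * n%:R).
    rewrite /t invf_div; field; rewrite ?gt_eqF //.
  by rewrite ler_wpM2l // invr_ge0 ltW.
- rewrite -(scaleVK t y t0) LZ -scalerBr nY_Z gtr0_norm ?invr_gt0 //.
  rewrite -(ltr_pM2l tp) mulrA mulfV // mul1r.
  exact: h'.
Qed.

Lemma open_map : exists M, 0 <= M /\ forall y, exists x, [/\ S x, L x = y & nX x <= M * nY y].
Proof.
have [M [M0 A]] := approx_ball.
have gex : forall p : Y * R, exists x, 0 < p.2 ->
    [/\ S x, nX x <= M * nY p.1 & nY (L x - p.1) < p.2].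
  move=> [y e] /=; case: (lerP e 0) => [e0|e0]; first by exists 0.
  by have [x hx] := A y e e0; exists x.
have [g hg] := ClassicalEpsilon.choice _ gex.
exists (2 * M); split; first by rewrite mulr_ge0.
move=> y.
have [ny0|ny0] := eqVneq (nY y) 0.
  by exists 0; rewrite (nY_eq0 y ny0) nX0 L0 nY0 mulr0; split.
have nyp : 0 < nY y by rewrite lt_def ny0 nY_ge0.
set q : R := 2^-1.
have q0 : 0 < q by rewrite /q invr_gt0.
have q1 : q <= 1 by rewrite /q; lra.
have h2q : 2 * q = 1 by rewrite /q; lra.
pose d k := nY y * q ^+ k.+1.
have dp : forall k, 0 < d k by move=> k; rewrite /d mulr_gt0 // exprn_gt0.
pose st := fun k => nat_rect (fun _ => (Y * X)%type) (y, 0)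
   (fun k p => (p.1 - L (g (p.1, d k)), p.2 + g (p.1, d k))) k.
pose xk k := g ((st k).1, d k).
have stS : forall k, st k.+1 = ((st k).1 - L (xk k), (st k).2 + xk k) by [].
have hxk : forall k, [/\ S (xk k), nX (xk k) <= M * nY (st k).1 &
                         nY (L (xk k) - (st k).1) < d k].
  by move=> k; apply: (hg ((st k).1, d k)); apply: dp.
have I1 : forall k, S (st k).2.
  elim=> [|k IH]; first exact: S0.
  by rewrite stS /=; apply: SD => //; case: (hxk k).
have I2 : forall k, (st k).1 = y - L (st k).2.
  elim=> [|k IH]; first by rewrite /= L0 subr0.
  by rewrite stS /= IH LD opprD addrA.
have I3 : forall k, nY (st k).1 <= nY y * q ^+ k.
  elim=> [|k IH]; first by rewrite /= expr0 mulr1.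
  rewrite stS /= nYB; case: (hxk k) => _ _ h; apply: (ltW (lt_le_trans h _)).
  by rewrite /d.
have I4 : forall k, nX (xk k) <= M * nY y * q ^+ k.
  move=> k; case: (hxk k) => _ h _; apply: (le_trans h).
  by rewrite -mulrA ler_wpM2l.
have I5 : forall k m, (k <= m)%N ->
    nX ((st m).2 - (st k).2) <= 2 * M * nY y * (q ^+ k - q ^+ m).
  move=> k; elim=> [|m IH].
    by rewrite leqn0 => /eqP ->; rewrite subrr nX0 subrr mulr0.
  rewrite leq_eqVlt => /orP[/eqP ->|]; first by rewrite subrr nX0 subrr mulr0.
  rewrite ltnS => km; rewrite stS /= (addrAC _ (xk m)).
  apply: (le_trans (nX_D _ _)).
  have h1 := IH km; have h2 := I4 m.
  apply: (le_trans (lerD h1 h2)).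
  have hq : q ^+ m = 2 * q ^+ m.+1 by rewrite exprS mulrA h2q mul1r.
  by rewrite hq le_eqVlt; apply/orP; left; apply/eqP; ring.
have A0 : 0 <= 2 * M * nY y by rewrite !mulr_ge0 // ltW.
have qp : forall j, 0 <= q ^+ j by move=> j; rewrite exprn_ge0 // ltW.
have I6 : forall k m, (k <= m)%N -> nX ((st m).2 - (st k).2) <= 2 * M * nY y * q ^+ k.
  move=> k m km; apply: (le_trans (I5 k m km)).
  by rewrite ler_wpM2l // lerBlDr lerDl qp.
have cau : rcauchy nX (fun k => (st k).2).
  move=> e he.
  have Kp : 0 < 2 * (2 * M * nY y) + 1 by rewrite ltr_wpDl // mulr_ge0.
  have [N hN] := half_pow_small (e / (2 * (2 * M * nY y) + 1)) (divr_gt0 he Kp).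
  exists N => m k hm hk /=.
  have h1 := I6 N m hm; have h2 := I6 N k hk.
  have := nX_tri (st m).2 (st N).2 (st k).2; rewrite (nXB (st N).2).
  move: hN; rewrite ltr_pdivlMr // => hN.
  set AA := 2 * M * nY y in A0 h1 h2 hN Kp *.
  set B := q ^+ N in h1 h2 hN *.
  have B0 : 0 <= B by apply: qp.
  have AB : 0 <= AA * B by apply: mulr_ge0.
  nra.
have [l [Sl hl]] := Scomp _ I1 cau.
exists l; split => //.
- apply/eqP; rewrite -subr_eq0; apply/eqP; apply: nY_eq0; apply/le_anti.
  rewrite nY_ge0 andbT; apply: le_of_eps => e he; rewrite add0r.
  have c1 : 0 < 2 * (cL + 1) by rewrite mulr_gt0 // ltr_wpDl.
  have y1 : 0 < 2 * (nY y + 1) by rewrite mulr_gt0 // ltr_wpDl // ltW.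
  have [N1 hN1] := hl (e / (2 * (cL + 1))) (divr_gt0 he c1).
  have [N2 hN2] := half_pow_small (e / (2 * (nY y + 1))) (divr_gt0 he y1).
  set m := maxn N1 N2.
  have E : L l - y = L (l - (st m).2) - (st m).1.
    by rewrite I2 LB opprB addrA subrK.
  rewrite E; apply: (le_trans (nY_D _ _)); rewrite nYN.
  have h1 := HLb (l - (st m).2); rewrite nXB in h1.
  have h2 := hN1 m (leq_maxl _ _).
  have h3 := I3 m.
  have h4 : q ^+ m <= q ^+ N2 by apply: (ler_wiXn2l (ltW q0) q1); apply: leq_maxr.
  have h5 : cL * nX ((st m).2 - l) <= e / 2.
    apply: (le_trans (ler_wpM2l cL_ge0 (ltW h2))).
    rewrite mulrA ler_pdivrMr //; nra.
  have h6 : nY y * q ^+ m <= e / 2.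
    have h7 : q ^+ m < e / (2 * (nY y + 1)) by apply: le_lt_trans h4 hN2.
    move: h7; rewrite ltr_pdivlMr // => h7.
    have := qp m; nra.
  lra.
- apply: le_of_eps => e he.
  have [N hN] := hl e he.
  have h1 := hN N (leqnn N).
  have h2 := I6 0 N (leq0n N).
  rewrite /= subr0 expr0 mulr1 in h2.
  have := nX_tri l (st N).2 0; rewrite !subr0 (nXB l) => h3.
  lra.
Qed.

End OM.

Set Implicit Arguments.

Section Conv.
Variable R : realType.
Local Notation C := (complex R).

Lemma Re_mulR (c : C) (r : R) : complex.Re (c * r%:C) = complex.Re c * r.
Proof. by case: c => a b /=; rewrite mulr0 subr0. Qed.

Lemma sqrtC_R (r : R) : 0 <= r -> sqrtC (r%:C) = (Num.sqrt r)%:C.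
Proof.
move=> r0; rewrite -{1}(sqr_sqrtr r0) rmorphXn /= sqrCK //.
by rewrite ler0c sqrtr_ge0.
Qed.

Variable V : lmodType C.

Section Lin.
Variable W : lmodType C.
Variable f : V -> W.
Hypothesis hf : forall (a : C) x y, f (a *: x + y) = a *: f x + f y.
Lemma lin0 : f 0 = 0.
Proof.
have := hf 1 0 0; rewrite !scale1r addr0 => h.
have : f 0 + 0 = f 0 + f 0 by rewrite addr0.
by move/addrI.
Qed.
Lemma linZ a x : f (a *: x) = a *: f x.
Proof. by rewrite -[a *: x]addr0 hf lin0 addr0. Qed.
Lemma linD x y : f (x + y) = f x + f y.
Proof. by have := hf 1 x y; rewrite !scale1r. Qed.
Lemma linN x : f (- x) = - f x.
Proof. by rewrite -scaleN1r linZ scaleN1r. Qed.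
Lemma linB x y : f (x - y) = f x - f y.
Proof. by rewrite linD linN. Qed.
End Lin.

Variable ip : V -> V -> C.
Hypothesis hip : is_inner ip.

Lemma complete_real : complete_for (hnorm ip) ->
  forall u, rcauchy (nr ip) u -> exists l, rlim (nr ip) u l.
Proof.
move=> hc u hu.
have [l hl] : exists l, forall eps : C, 0 < eps -> exists N : nat, forall n : nat,
        (N <= n)%N -> hnorm ip (u n - l) < eps.
  apply: hc => eps /gt0_realC [-> he].
  have [N hN] := hu _ he; exists N => m n hm hn.
  by rewrite hnormE // ltcR; apply: hN.
exists l => e he.
have e0 : 0 < e%:C by rewrite ltcR.
have [N hN] := hl e%:C e0.
by exists N => k hk; have := hN k hk; rewrite hnormE // ltcR.
Qed.

Lemma dense_real (A B : V -> Prop) : dense_in (hnorm ip) A B ->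
  forall x, B x -> forall e, 0 < e -> exists y, A y /\ nr ip (x - y) < e.
Proof.
move=> hd x Bx e he.
have e0 : 0 < e%:C by rewrite ltcR.
have [y [Ay hy]] := hd x Bx e%:C e0.
by exists y; split => //; move: hy; rewrite hnormE // ltcR.
Qed.

Lemma bound_real (W : lmodType C) (ipW : W -> W -> C) (hipW : is_inner ipW)
   (f : V -> W) (c : C) :
  (forall x, hnorm ipW (f x) <= c * hnorm ip x) ->
  exists c', 0 <= c' /\ forall x, nr ipW (f x) <= c' * nr ip x.
Proof.
move=> hb; exists `|complex.Re c|; split => // x.
have := hb x; rewrite !hnormE // lecE => /andP[_].
rewrite Re_mulR /= => h; apply: (le_trans h).
by rewrite ler_wpM2r ?nr_ge0 // ler_norm.
Qed.

Lemma orth_lemma (D : V -> Prop) : dense_in (hnorm ip) D (fun _ => True) ->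
  forall w, (forall v, D v -> ip v w = 0) -> w = 0.
Proof.
move=> hd w hw; apply: (nr_eq0 hip); apply/le_anti; rewrite (nr_ge0 hip) andbT.
apply: le_of_eps => e he; rewrite add0r.
have [v [Dv hv]] := dense_real hd (x := w) I he.
apply: ltW; apply: le_lt_trans hv.
rewrite -(ler_pXn2r (n:=2)) // ?nnegrE ?nr_ge0 //.
rewrite -!(Re_ipxx hip) (ipBl hip) !(ipBr hip) (hw v Dv) (ipC hip v w) (hw v Dv).
rewrite conjC0 !subr0 raddfB /= !(Re_ipxx hip) sub0r raddfN /= opprK (Re_ipxx hip) lerDl sqr_ge0 //.
Qed.

End Conv.

Lemma om_apply (R : realType) (H1 K : lmodType (complex R))
  (ip1 : H1 -> H1 -> complex R) (ipK : K -> K -> complex R)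
  (hip1 : is_inner ip1) (hipK : is_inner ipK)
  (c1 : complete_for (hnorm ip1)) (cK : complete_for (hnorm ipK))
  (ga gb : H1 -> K)
  (hga : bounded_lin (hnorm ip1) (hnorm ipK) ga)
  (hgb : bounded_lin (hnorm ip1) (hnorm ipK) gb)
  (surj : forall y, exists h, ga h = 0 /\ gb h = y) :
  exists M, 0 <= M /\ forall y, exists h,
    [/\ ga h = 0, gb h = y & nr ip1 h <= M * nr ipK y].
Proof.
case: hga => lina [ca hca]; case: hgb => linb [cb hcb].
have [ca' [ca0 hA]] := bound_real hip1 hipK hca.
have [cb' [cb0 hB]] := bound_real hip1 hipK hcb.
have S0 : ga 0 = 0 by apply: lin0.
have SL : forall a x y, ga x = 0 -> ga y = 0 -> ga (a *: x + y) = 0.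
  by move=> a x y hx hy; rewrite lina hx hy scaler0 addr0.
have Scomp : forall u, (forall n, ga (u n) = 0) -> rcauchy (nr ip1) u ->
    exists l, ga l = 0 /\ rlim (nr ip1) u l.
  move=> u Su cu; have [l hl] := complete_real hip1 c1 cu.
  exists l; split => //.
  apply: (nr_eq0 hipK); apply/le_anti; rewrite (nr_ge0 hipK) andbT.
  apply: le_of_eps => e he; rewrite add0r.
  have c0 : 0 < ca' + 1 by rewrite ltr_wpDl.
  have [N hN] := hl (e / (ca' + 1)) (divr_gt0 he c0).
  have E : ga l = ga (l - u N) by rewrite (linB lina) Su subr0.
  rewrite E; apply: (le_trans (hA _)); rewrite (nrB hip1).
  have h := hN N (leqnn N).
  apply: (le_trans (ler_wpM2l ca0 (ltW h))).
  rewrite mulrA ler_pdivrMr //; nra.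
have Ycomp := complete_real hipK cK.
have Lsurj : forall y, exists x, ga x = 0 /\ gb x = y by [].
have [M [M0 hM]] := @open_map _ _ _ (nr ip1) (nr ipK) (nrD hip1) (nrZR hip1)
   (nr_ge0 hipK) (nrD hipK) (nrZR hipK) (nr_eq0 hipK) (fun h => ga h = 0)
   S0 SL Scomp Ycomp gb linb cb' cb0 hB Lsurj.
by exists M; split => // y; have [x [? ? ?]] := hM y; exists x.
Qed.
Unset Implicit Arguments. Set Strict Implicit.
Theorem theorem4p3 (R : realType) (H0 H1 Kd K : lmodType (complex R))
  (ip0 : H0 -> H0 -> complex R) (ip1 : H1 -> H1 -> complex R)
  (ipd : Kd -> Kd -> complex R) (ipK : K -> K -> complex R)
  (DT : H0 -> Prop) (T : H0 -> H0) (DTs : H0 -> Prop) (Ts : H0 -> H0)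
  (i1 : H1 -> H0) (iK : K -> Kd) (g0 g1 : H1 -> K)
  (* H0 : separable Hilbert space *)
  (hH0 : is_hilbert ip0) (sH0 : separable_for (hnorm ip0))
  (* T : closed, densely defined, symmetric operator in H0; (DTs, Ts) = Tstar *)
  (linT : linear_on DT T) (denseT : dense_in (hnorm ip0) DT (fun _ => True))
  (symT : symmetric_op ip0 DT T) (closedT : closed_op (hnorm ip0) DT T)
  (adjT : is_adjoint ip0 DT T DTs Ts)
  (* H1 : dense subspace of H0, Hilbert in its own right, bounded inclusion i1 *)
  (hH1 : is_hilbert ip1) (inj1 : injective i1)
  (bi1 : bounded_lin (hnorm ip1) (hnorm ip0) i1)
  (dense1 : dense_in (hnorm ip0) (fun x => exists h, i1 h = x) (fun _ => True))
  (* K^∂ separable Hilbert; K dense subspace, Hilbert, bounded inclusion iK *)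
  (hKd : is_hilbert ipd) (sKd : separable_for (hnorm ipd))
  (hK : is_hilbert ipK) (injK : injective iK)
  (biK : bounded_lin (hnorm ipK) (hnorm ipd) iK)
  (denseK : dense_in (hnorm ipd) (fun y => exists k, iK k = y) (fun _ => True))
  (* H1 ⊂ D(Tstar), dense in the graph norm *)
  (H1sub : forall h : H1, DTs (i1 h))
  (H1dense : dense_in (graph_norm ip0 Ts) (fun x => exists h, i1 h = x) DTs)
  (* Tstar|_{H1} : H1 -> H0 bounded *)
  (bTs : exists c : complex R, forall h : H1, hnorm ip0 (Ts (i1 h)) <= c * hnorm ip1 h)
  (* gamma_0, gamma_1 bounded, gamma = gamma_0 ⊕ gamma_1 surjective *)
  (bg0 : bounded_lin (hnorm ip1) (hnorm ipK) g0)
  (bg1 : bounded_lin (hnorm ip1) (hnorm ipK) g1)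
  (surjg : forall a b : K, exists h : H1, g0 h = a /\ g1 h = b)
  (* Ker gamma dense in H0 and D(T) = Ker gamma *)
  (denseKer : dense_in (hnorm ip0)
     (fun x => exists h, [/\ i1 h = x, g0 h = 0 & g1 h = 0]) (fun _ => True))
  (DTker : forall x : H0, DT x <-> exists h, [/\ i1 h = x, g0 h = 0 & g1 h = 0])
  (* Lagrange identity on H1 *)
  (lagrange : forall u v : H1,
     ip0 (Ts (i1 u)) (i1 v) - ip0 (i1 u) (Ts (i1 v))
     = ipd (iK (g1 u)) (iK (g0 v)) - ipd (iK (g0 u)) (iK (g1 v))) :
  (* Gamma_0, Gamma_1 : D(Tstar) -> K' (continuous antilinear functionals on K) *)
  exists G0 G1 : H0 -> K -> complex R,
    (forall G, G = G0 \/ G = G1 ->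
      [/\ (* values are anti-linear functionals on K *)
          (forall u : H0, DTs u -> forall (a : complex R) (x y : K),
              G u (a *: x + y) = a^* * G u x + G u y),
          (* linear on D(Tstar) *)
          (forall (a : complex R) (u w : H0), DTs u -> DTs w -> forall x : K,
              G (a *: u + w) x = a * G u x + G w x) &
          (* bounded D(Tstar) (graph norm) -> K' (dual norm) *)
          (exists c : complex R, forall u : H0, DTs u -> forall x : K,
              `|G u x| <= c * graph_norm ip0 Ts u * hnorm ipK x)]) /\
    (* extensions of gamma_0, gamma_1 (K ⊂ K^∂ ⊂ K') *)
    (forall (h : H1) (x : K), G0 (i1 h) x = ipd (iK (g0 h)) (iK x)) /\
    (forall (h : H1) (x : K), G1 (i1 h) x = ipd (iK (g1 h)) (iK x)) /\
    (* generalized Green formula *)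
    (forall (u : H0) (v : H1), DTs u ->
       ip0 (Ts u) (i1 v) - ip0 u (Ts (i1 v)) = G1 u (g0 v) - G0 u (g1 v)).
Proof.
case: hH0 => hip0 cH0; case: hH1 => hip1 cH1; case: hKd => hipd _; case: hK => hipK cK.
have orth := orth_lemma hip0 denseT.
case: adjT => adj1 adj2.
have i1L : forall (a : complex R) x y, i1 (a *: x + y) = a *: i1 x + i1 y by case: bi1.
have iKL : forall (a : complex R) x y, iK (a *: x + y) = a *: iK x + iK y by case: biK.
have g0L : forall (a : complex R) x y, g0 (a *: x + y) = a *: g0 x + g0 y by case: bg0.
have g1L : forall (a : complex R) x y, g1 (a *: x + y) = a *: g1 x + g1 y by case: bg1.
have DT_DTs : forall z, DT z -> DTs z.
  by move=> z /DTker [h [<- _ _]].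
have TsT : forall z, DT z -> Ts z = T z.
  move=> z Dz; apply/eqP; rewrite -subr_eq0; apply/eqP; apply: orth => v Dv.
  by rewrite (ipBr hip0) -(adj2 z (DT_DTs z Dz) v Dv) (symT v z Dv Dz) subrr.
have TsLin : forall a u w, DTs u -> DTs w ->
    DTs (a *: u + w) /\ Ts (a *: u + w) = a *: Ts u + Ts w.
  move=> a u w Du Dw.
  have E : forall v, DT v -> ip0 (T v) (a *: u + w) = ip0 v (a *: Ts u + Ts w).
    move=> v Dv; rewrite (ipDr hip0) (ipZr hip0) (ipDr hip0) (ipZr hip0).
    by rewrite (adj2 u Du v Dv) (adj2 w Dw v Dv).
  have D' : DTs (a *: u + w) by apply/adj1; exists (a *: Ts u + Ts w).
  split => //; apply/eqP; rewrite -subr_eq0; apply/eqP; apply: orth => v Dv.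
  by rewrite (ipBr hip0) -(adj2 _ D' v Dv) (E v Dv) subrr.
pose Phi u v := ip0 (Ts u) (i1 v) - ip0 u (Ts (i1 v)).
have Phi_ker : forall u z, DTs u -> g0 z = 0 -> g1 z = 0 -> Phi u z = 0.
  move=> u z Du h0 h1.
  have Dz : DT (i1 z) by apply/DTker; exists z.
  rewrite /Phi (ipC hip0 (i1 z)) -(adj2 u Du _ Dz) -(ipC hip0) (TsT _ Dz).
  by rewrite subrr.
have Phi_lin2 : forall u a v w, DTs u -> Phi u (a *: v + w) = a^* * Phi u v + Phi u w.
  move=> u a v w Du; rewrite /Phi i1L.
  have [_ ->] := TsLin a _ _ (H1sub v) (H1sub w).
  rewrite !(ipDr hip0) !(ipZr hip0); ring.
have Phi_add : forall u v w, DTs u -> Phi u (v + w) = Phi u v + Phi u w.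
  by move=> u v w Du; have := Phi_lin2 u 1 v w Du; rewrite scale1r conjC1 mul1r.
have Phi_eq : forall u v w, DTs u -> g0 v = g0 w -> g1 v = g1 w -> Phi u v = Phi u w.
  move=> u v w Du h0 h1.
  have -> : v = (v - w) + w by rewrite subrK.
  rewrite Phi_add // Phi_ker ?add0r // ?(linB g0L) ?(linB g1L) ?h0 ?h1 ?subrr //.
have Phi_lin1 : forall a u w v, DTs u -> DTs w ->
    Phi (a *: u + w) v = a * Phi u v + Phi w v.
  move=> a u w v Du Dw; rewrite /Phi.
  have [_ ->] := TsLin a _ _ Du Dw.
  rewrite !(ipDl hip0) !(ipZl hip0); ring.
have [M1 [M10 hM1]] := om_apply hip1 hipK cH1 cK bg0 bg1 (fun y => surjg 0 y).
have surj' : forall y, exists h, g1 h = 0 /\ g0 h = y.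
  by move=> y; have [h [? ?]] := surjg y 0; exists h.
have [M0 [M00 hM0]] := om_apply hip1 hipK cH1 cK bg1 bg0 surj'.
have [p1 hp1] := ClassicalEpsilon.choice _ hM1.
have [p0 hp0] := ClassicalEpsilon.choice _ hM0.
have [ci [ci0 hci]] : exists c, 0 <= c /\ forall h, nr ip0 (i1 h) <= c * nr ip1 h.
  by case: bi1 => _ [c hc]; apply: (bound_real hip1 hip0 hc).
have [cT [cT0 hcT]] : exists c, 0 <= c /\ forall h, nr ip0 (Ts (i1 h)) <= c * nr ip1 h.
  by case: bTs => c hc; apply: (bound_real (f := fun h => Ts (i1 h)) hip1 hip0 hc).
pose gn u := Num.sqrt (nr ip0 u ^+ 2 + nr ip0 (Ts u) ^+ 2).
have gnE : forall u, graph_norm ip0 Ts u = (gn u)%:C.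
  move=> u; rewrite /graph_norm !(ipxxE hip0) -rmorphD sqrtC_R //.
  by rewrite addr_ge0 ?sqr_ge0.
have gn1 : forall u, nr ip0 u <= gn u.
  move=> u; rewrite -[leLHS]ger0_norm ?(nr_ge0 hip0) // -sqrtr_sqr ler_sqrt.
    by rewrite lerDl sqr_ge0.
  by rewrite addr_ge0 ?sqr_ge0.
have gn2 : forall u, nr ip0 (Ts u) <= gn u.
  move=> u; rewrite -[leLHS]ger0_norm ?(nr_ge0 hip0) // -sqrtr_sqr ler_sqrt.
    by rewrite lerDr sqr_ge0.
  by rewrite addr_ge0 ?sqr_ge0.
have gn0 : forall u, 0 <= gn u by move=> u; apply: sqrtr_ge0.
have Phi_bound : forall u v, `|Phi u v| <= ((ci + cT) * gn u * nr ip1 v)%:C.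
  move=> u v; apply: (le_trans (ler_normB _ _)).
  apply: (le_trans (lerD (CS hip0 _ _) (CS hip0 _ _))).
  rewrite -rmorphD lecR.
  have h1 : nr ip0 (Ts u) * nr ip0 (i1 v) <= gn u * (ci * nr ip1 v).
    by apply: ler_pM; rewrite ?(nr_ge0 hip0) ?gn2 ?hci.
  have h2 : nr ip0 u * nr ip0 (Ts (i1 v)) <= gn u * (cT * nr ip1 v).
    by apply: ler_pM; rewrite ?(nr_ge0 hip0) ?gn1 ?hcT.
  have -> : (ci + cT) * gn u * nr ip1 v = gn u * (ci * nr ip1 v) + gn u * (cT * nr ip1 v) by ring.
  exact: lerD.
have Gbound : forall (p : K -> H1) (M : R), 0 <= M ->
    (forall x, nr ip1 (p x) <= M * nr ipK x) -> forall u x,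
    `|Phi u (p x)| <= ((ci + cT) * M)%:C * graph_norm ip0 Ts u * hnorm ipK x.
  move=> p M M0' hp u x; apply: (le_trans (Phi_bound u (p x))).
  rewrite gnE (hnormE hipK) -!rmorphM lecR.
  have -> : (ci + cT) * M * gn u * nr ipK x = (ci + cT) * gn u * (M * nr ipK x) by ring.
  by apply: ler_wpM2l; rewrite ?mulr_ge0 ?addr_ge0.
exists (fun u x => - Phi u (p1 x)), (fun u x => Phi u (p0 x)).
split; [|split; [|split]].
- move=> G [->|->]; split.
  + move=> u Du a x y; rewrite (Phi_eq u (p1 (a *: x + y)) (a *: p1 x + p1 y) Du).
      by rewrite Phi_lin2 //; ring.
    * case: (hp1 (a *: x + y)) => -> _ _; rewrite g0L.
      by case: (hp1 x) => -> _ _; case: (hp1 y) => -> _ _; rewrite scaler0 addr0.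
    * case: (hp1 (a *: x + y)) => _ -> _; rewrite g1L.
      by case: (hp1 x) => _ -> _; case: (hp1 y) => _ -> _.
  + by move=> a u w Du Dw x; rewrite Phi_lin1 //; ring.
  + exists ((ci + cT) * M1)%:C => u Du x; rewrite normrN.
    by apply: Gbound => // y; case: (hp1 y).
  + move=> u Du a x y; rewrite (Phi_eq u (p0 (a *: x + y)) (a *: p0 x + p0 y) Du).
      by rewrite Phi_lin2.
    * case: (hp0 (a *: x + y)) => _ -> _; rewrite g0L.
      by case: (hp0 x) => _ -> _; case: (hp0 y) => _ -> _.
    * case: (hp0 (a *: x + y)) => -> _ _; rewrite g1L.
      by case: (hp0 x) => -> _ _; case: (hp0 y) => -> _ _; rewrite scaler0 addr0.
  + by move=> a u w Du Dw x; rewrite Phi_lin1.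
  + exists ((ci + cT) * M0)%:C => u Du x.
    by apply: Gbound => // y; case: (hp0 y).
- move=> h x; rewrite /Phi lagrange.
  case: (hp1 x) => -> -> _; rewrite (lin0 iKL) (ip0r hipd) sub0r opprK //.
- move=> h x; rewrite /Phi lagrange.
  case: (hp0 x) => -> -> _; rewrite (lin0 iKL) (ip0r hipd) subr0 //.
- move=> u v Du; rewrite opprK -Phi_add //.
  apply: Phi_eq => //.
    case: (hp0 (g0 v)) => _ h0 _; case: (hp1 (g1 v)) => h1 _ _.
    by rewrite (linD g0L) h0 h1 addr0.
  case: (hp0 (g0 v)) => h0 _ _; case: (hp1 (g1 v)) => _ h1 _.
  by rewrite (linD g1L) h0 h1 add0r.
Qed.
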